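(* Let $f\in\mathcal{H}_{\rm fin}$ be not identically zero and bi-$A(\widehat{\mathbb{Z}})$-invariant. Suppose $\mathrm{supp}\,f\subseteq ZK'$ for a compact open subgroup $K'$ of $\mathrm{GL}_2(\mathbb{A}_{\rm fin})$ with $ZK'=\phi(y,x)$, where $y\in\mathbb{Q}_+$ and $x\in\mathbb{A}_{\rm fin}/\widehat{\mathbb{Z}}$ is represented so that for each prime $p$ either $x_p=0$ or $v_p(x_p)<0$. If $v_2(x)\ne-1$, then $\mathrm{supp}\,f\subseteq a(y)^{-1}ZK\,a(y)$ (i.e. $f$ satisfies geometric assumption (ii) and $y$ controls the support of $f$).
   Context: $\mathcal{H}_{\rm fin}$ is the space of locally constant functions on $\mathrm{GL}_2(\mathbb{A}_{\rm fin})$ invariant under and compactly supported modulo the center $Z=Z(\mathbb{A}_{\rm fin})$. $K=\mathrm{GL}_2(\widehat{\mathbb{Z}})$, $a(y)=\mathrm{diag}(y,1)$, $A(\widehat{\mathbb{Z}})=\{a(u):u\in\widehat{\mathbb{Z}}^\times\}$, and $\phi(y,x)=\begin{pmatrix}y&x\\0&1\end{pmatrix}^{-1}ZK\begin{pmatrix}y&x\\0&1\end{pmatrix}$. Geometric assumption (ii) for $f$ means: $\mathrm{supp}\,f\subseteq a(y)^{-1}ZKa(y)$ for some $y\in\mathbb{Q}_+$; such $y$ is said to control the support of $f$. *)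

(* Defs.v *)
(* A concrete, setoid-style model of the finite adeles of Q
   and of GL_2(A_fin). *)
From mathcomp Require Import all_boot all_order all_algebra.
Set Implicit Arguments. Unset Strict Implicit. Unset Printing Implicit Defensive.
Import Order.TTheory GRing.Theory Num.Theory.
Local Open Scope ring_scope.

(** Profinite integers Zhat = lim Z/nZ : a representative is a compatible
    family of integers z n (meaningful modulo n, for n > 0). *)
Definition zhat := nat -> int.
Definition zhat_valid (z : zhat) : Prop :=
  forall m n : nat, (0 < m)%N -> (0 < n)%N -> (m %| n)%N ->
    (m%:Z %| z n - z m)%Z.

(** Finite adeles A_fin = Zhat[1/N] : the pair (N, z) represents z / N. *)
Record afin := AF { af_den : nat ; af_num : zhat }.
Definition af_valid (x : afin) : Prop :=
  (0 < af_den x)%N /\ zhat_valid (af_num x).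
(* equality of adeles: (N,z) = (M,w) iff M z = N w in Zhat *)
Definition af_eq (x y : afin) : Prop :=
  forall n : nat, (0 < n)%N ->
    (n%:Z %| (af_den y)%:Z * af_num x n - (af_den x)%:Z * af_num y n)%Z.
Definition af_of_rat (r : rat) : afin :=
  AF (`|denq r|)%N (fun _ => numq r).
Definition af_add (x y : afin) : afin :=
  AF (af_den x * af_den y)%N
     (fun n => (af_den y)%:Z * af_num x n + (af_den x)%:Z * af_num y n).
Definition af_opp (x : afin) : afin := AF (af_den x) (fun n => - af_num x n).
Definition af_sub (x y : afin) : afin := af_add x (af_opp y).
Definition af_mul (x y : afin) : afin :=
  AF (af_den x * af_den y)%N (fun n => af_num x n * af_num y n).
Definition af0 : afin := af_of_rat 0.
Definition af1 : afin := af_of_rat 1.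
Definition af_in_zhat (x : afin) : Prop :=
  ((af_den x)%:Z %| af_num x (af_den x))%Z.
Definition af_unit (x : afin) : Prop :=
  exists e, af_valid e /\ af_eq (af_mul x e) af1.
Definition zhat_unit (x : afin) : Prop :=
  af_in_zhat x /\ exists e, af_valid e /\ af_in_zhat e /\ af_eq (af_mul x e) af1.
Definition af_in_Zp (p : nat) (x : afin) : Prop :=
  exists d : nat, (0 < d)%N /\ ~~ (p %| d)%N /\
    af_in_zhat (af_mul (af_of_rat d%:R) x).
(* the p-component x_p is 0 (i.e. lies in p^k Z_p for all k) *)
Definition af_p_zero (p : nat) (x : afin) : Prop :=
  forall k : nat, af_in_Zp p (af_mul (af_of_rat ((p ^ k)%N%:R)^-1) x).
(* v_p(x_p) = -1 *)
Definition af_val_m1 (p : nat) (x : afin) : Prop :=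
  af_in_Zp p (af_mul (af_of_rat p%:R) x) /\ ~ af_in_Zp p x.

Record mat2 := M2 { m11 : afin ; m12 : afin ; m21 : afin ; m22 : afin }.
Definition mat_valid (g : mat2) : Prop :=
  [/\ af_valid (m11 g), af_valid (m12 g), af_valid (m21 g) & af_valid (m22 g)].
Definition mat_eq (g h : mat2) : Prop :=
  [/\ af_eq (m11 g) (m11 h), af_eq (m12 g) (m12 h),
      af_eq (m21 g) (m21 h) & af_eq (m22 g) (m22 h)].
Definition mat_mul (g h : mat2) : mat2 :=
  M2 (af_add (af_mul (m11 g) (m11 h)) (af_mul (m12 g) (m21 h)))
     (af_add (af_mul (m11 g) (m12 h)) (af_mul (m12 g) (m22 h)))
     (af_add (af_mul (m21 g) (m11 h)) (af_mul (m22 g) (m21 h)))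
     (af_add (af_mul (m21 g) (m12 h)) (af_mul (m22 g) (m22 h))).
Definition mat_scal (t : afin) (g : mat2) : mat2 :=
  M2 (af_mul t (m11 g)) (af_mul t (m12 g)) (af_mul t (m21 g)) (af_mul t (m22 g)).
Definition mat_det (g : mat2) : afin :=
  af_sub (af_mul (m11 g) (m22 g)) (af_mul (m12 g) (m21 g)).

Definition inGL2 (g : mat2) : Prop := mat_valid g /\ af_unit (mat_det g).
Definition inK (g : mat2) : Prop :=
  mat_valid g /\ zhat_unit (mat_det g) /\
  [/\ af_in_zhat (m11 g), af_in_zhat (m12 g),
      af_in_zhat (m21 g) & af_in_zhat (m22 g)].
Definition inKN (N : nat) (g : mat2) : Prop :=
  let iN := af_of_rat (N%:R)^-1 in
  [/\ inK g, af_in_zhat (af_mul iN (af_sub (m11 g) af1)), af_in_zhat (af_mul iN (m12 g)),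
      af_in_zhat (af_mul iN (m21 g)) & af_in_zhat (af_mul iN (af_sub (m22 g) af1))].
(* g in Z K, Z = center = scalar matrices with entries in A_fin^x *)
Definition inZK (g : mat2) : Prop :=
  exists t, af_valid t /\ af_unit t /\ inK (mat_scal t g).

Definition amat (u : afin) : mat2 := M2 u af0 af0 af1.
Definition hmat (y : rat) (x : afin) : mat2 := M2 (af_of_rat y) x af0 af1.
Definition hinv (y : rat) (x : afin) : mat2 :=
  M2 (af_of_rat y^-1) (af_opp (af_mul (af_of_rat y^-1) x)) af0 af1.
(* g in phi(y,x) = [[y,x],[0,1]]^-1 Z K [[y,x],[0,1]] *)
Definition in_phi (y : rat) (x : afin) (g : mat2) : Prop :=
  inZK (mat_mul (mat_mul (hmat y x) g) (hinv y x)).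

Definition in_Hfin (C : numClosedFieldType) (f : mat2 -> C) : Prop :=
  (* f is a function on GL_2(A_fin) *)
  (forall g h, inGL2 g -> inGL2 h -> mat_eq g h -> f g = f h) /\
  (forall t g, af_valid t -> af_unit t -> inGL2 g -> f (mat_scal t g) = f g) /\
  (* locally constant *)
  (forall g, inGL2 g -> exists N : nat, (0 < N)%N /\
       forall k, inKN N k -> f (mat_mul g k) = f g) /\
  (* compactly supported modulo Z: support covered by finitely many Z g K *)
  (exists (n : nat) (gs : nat -> mat2), (forall i, (i < n)%N -> inGL2 (gs i)) /\
     forall g, inGL2 g -> f g != 0 ->
       exists2 i, (i < n)%N & exists t k, let h := gs i in [/\ af_valid t, af_unit t, inK k &
                          mat_eq g (mat_scal t (mat_mul h k))]).

Definition biA_invariant (C : numClosedFieldType) (f : mat2 -> C) : Prop :=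
  forall u g, af_valid u -> zhat_unit u -> inGL2 g ->
    f (mat_mul (amat u) g) = f g /\ f (mat_mul g (amat u)) = f g.

(* Main.v *)
Require Import Defs.
From Stdlib Require Import Classical.
From mathcomp Require Import all_boot all_order all_algebra ring zify.
Import Order.TTheory GRing.Theory Num.Theory.
Local Open Scope ring_scope.

Definition ev (n : nat) (x : afin) : rat := (af_num x n)%:~R / (Posz (af_den x))%:~R.
Arguments af_add : simpl never.
Arguments af_mul : simpl never.
Arguments af_opp : simpl never.
Arguments af_of_rat : simpl never.
Arguments ev : simpl never.

Lemma natrne0 (d : nat) : (0 < d)%N -> ((Posz d)%:~R : rat) != 0.
Proof. by move=> h; rewrite intr_eq0 -lt0n. Qed.

Lemma evR n r : ev n (af_of_rat r) = r.
Proof.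
rewrite /ev /af_of_rat /= -[Posz _]/(`|denq r|%:Z) gez0_abs ?denq_ge0 //.
exact: divq_num_den.
Qed.

Lemma evD n x y : (0 < af_den x)%N -> (0 < af_den y)%N ->
  ev n (af_add x y) = ev n x + ev n y.
Proof.
move=> hx hy; rewrite /ev /af_add /= PoszM.
rewrite !rmorphD !rmorphM /=.
have := natrne0 _ hx; have := natrne0 _ hy.
move=> *. field. by apply/andP.
Qed.

Lemma evM n x y : (0 < af_den x)%N -> (0 < af_den y)%N ->
  ev n (af_mul x y) = ev n x * ev n y.
Proof.
move=> hx hy; rewrite /ev /af_mul /= PoszM.
rewrite !rmorphM /=.
have := natrne0 _ hx; have := natrne0 _ hy.
move=> *. field. by apply/andP.
Qed.

Lemma evN n x : ev n (af_opp x) = - ev n x.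
Proof. by rewrite /ev /af_opp /= rmorphN mulNr. Qed.

Lemma den1 : af_den af1 = 1%N.
Proof. by []. Qed.
Lemma num1 n : af_num af1 n = 1.
Proof. by []. Qed.

Lemma vpos x : af_valid x -> (0 < af_den x)%N.
Proof. by case. Qed.
Arguments vpos {x}.

Lemma valid_add x y : af_valid x -> af_valid y -> af_valid (af_add x y).
Proof.
move=> [hx zx] [hy zy]; split; first by rewrite /af_add /= muln_gt0 hx hy.
move=> m n hm hn hmn; rewrite /af_add /=.
have -> : (af_den y)%:Z * af_num x n + (af_den x)%:Z * af_num y n -
   ((af_den y)%:Z * af_num x m + (af_den x)%:Z * af_num y m) =
   (af_den y)%:Z * (af_num x n - af_num x m) + (af_den x)%:Z * (af_num y n - af_num y m) by ring.
by apply: rpredD; apply: dvdz_mull; [apply: zx | apply: zy].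
Qed.

Lemma valid_mul x y : af_valid x -> af_valid y -> af_valid (af_mul x y).
Proof.
move=> [hx zx] [hy zy]; split; first by rewrite /af_mul /= muln_gt0 hx hy.
move=> m n hm hn hmn; rewrite /af_mul /=.
have -> : af_num x n * af_num y n - af_num x m * af_num y m =
   af_num x n * (af_num y n - af_num y m) + af_num y m * (af_num x n - af_num x m) by ring.
by apply: rpredD; apply: dvdz_mull; [apply: zy | apply: zx].
Qed.

Lemma valid_opp x : af_valid x -> af_valid (af_opp x).
Proof.
move=> [hx zx]; split => // m n hm hn hmn; rewrite /af_opp /= -opprD rpredN.
exact: zx.
Qed.

Lemma valid_rat r : af_valid (af_of_rat r).
Proof.
split; first by rewrite /af_of_rat /= absz_gt0 denq_neq0.
by move=> m n _ _ _; rewrite /af_of_rat /= subrr dvdz0.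
Qed.

Ltac vtac := repeat first
  [ assumption | apply: valid_add | apply: valid_mul | apply: valid_opp | apply: valid_rat ].
Ltac ptac := apply: vpos; vtac.

Definition isZ (r : rat) := exists k : int, r = k%:~R.

Lemma isZ_int (k : int) : isZ k%:~R. Proof. by exists k. Qed.
Lemma isZD a b : isZ a -> isZ b -> isZ (a + b).
Proof. by move=> [i ->] [j ->]; exists (i + j); rewrite rmorphD. Qed.
Lemma isZM a b : isZ a -> isZ b -> isZ (a * b).
Proof. by move=> [i ->] [j ->]; exists (i * j); rewrite rmorphM. Qed.
Lemma isZN a : isZ a -> isZ (- a).
Proof. by move=> [i ->]; exists (- i); rewrite rmorphN. Qed.
Lemma isZB a b : isZ a -> isZ b -> isZ (a - b).
Proof. by move=> ha hb; apply: isZD => //; apply: isZN. Qed.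

Lemma zin_ev x n : af_valid x -> (0 < n)%N -> (af_den x %| n)%N -> af_in_zhat x -> isZ (ev n x).
Proof.
move=> [hx zx] hn hd hz.
have h1 := zx _ _ hx hn hd.
have : ((af_den x)%:Z %| af_num x n)%Z.
  have -> : af_num x n = (af_num x n - af_num x (af_den x)) + af_num x (af_den x) by ring.
  by apply: rpredD.
case/dvdzP => k hk; exists k; rewrite /ev hk rmorphM /= mulfK //.
exact: natrne0.
Qed.

Lemma ev_zin x n : af_valid x -> (0 < n)%N -> (af_den x %| n)%N -> isZ (ev n x) -> af_in_zhat x.
Proof.
move=> [hx zx] hn hd [k hk].
have h1 := zx _ _ hx hn hd.
have e : af_num x n = k * (af_den x)%:Z.
  apply: (@intr_inj rat); rewrite rmorphM /= -hk /ev mulfVK //; exact: natrne0.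
rewrite /af_in_zhat.
have -> : af_num x (af_den x) = af_num x n - (af_num x n - af_num x (af_den x)) by ring.
apply: rpredB => //; rewrite e; apply: dvdz_mull; exact: dvdzz.
Qed.

Lemma eqz_of_ev x y n : (0 < af_den x)%N -> (0 < af_den y)%N -> ev n x = ev n y ->
  (af_den y)%:Z * af_num x n = (af_den x)%:Z * af_num y n.
Proof.
move=> hx hy; rewrite /ev => e; apply: (@intr_inj rat); rewrite !rmorphM /=.
have := natrne0 _ hx; have := natrne0 _ hy => h2 h1.
rewrite -(divfK h1 (af_num x n)%:~R) e.
by field.
Qed.

Arguments eqz_of_ev {x y n}.

Lemma ev_eq x y : (0 < af_den x)%N -> (0 < af_den y)%N ->
  (forall n, (0 < n)%N -> ev n x = ev n y) -> af_eq x y.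
Proof.
move=> hx hy e n hn; rewrite (eqz_of_ev hx hy (e n hn)) subrr; exact: dvdz0.
Qed.

Lemma af_eq_ex x y n : af_eq x y -> (0 < n)%N ->
  exists j : int, (af_den y)%:Z * af_num x n - (af_den x)%:Z * af_num y n = j * n%:Z.
Proof. by move=> h hn; apply/dvdzP; apply: h. Qed.
Arguments af_eq_ex {x y n}.

Lemma eq1_ev x n m : (0 < af_den x)%N -> af_eq x af1 -> (0 < n)%N ->
  (m * af_den x %| n)%N -> exists k : int, ev n x = 1 + (Posz m)%:~R * k%:~R.
Proof.
move=> hx he hn /dvdnP [q hq].
have [j hj] := af_eq_ex he hn.
rewrite den1 num1 in hj.
exists (j * q); rewrite /ev.
have e : af_num x n = (af_den x)%:Z + j * q * m * (af_den x)%:Z.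
  have -> : af_num x n = (af_den x)%:Z + j * n%:Z by lia.
  rewrite hq !PoszM; ring.
rewrite e; have := natrne0 _ hx => h1.
rewrite !rmorphD !rmorphM /=; field => //.
Qed.

Arguments eq1_ev {x n m}.
Arguments zin_ev {x n}.
Arguments ev_zin {x n}.

Lemma transfer x y z : (0 < af_den x)%N -> af_valid y -> af_valid z ->
  (forall n, (0 < n)%N -> ev n x = ev n y) -> af_eq x z -> af_eq y z.
Proof.
move=> hx [hy vy] [hz vz] e hxz n hn.
set m := (n * af_den x)%N.
have hm : (0 < m)%N by rewrite muln_gt0 hn hx.
have hnm : (n %| m)%N by apply: dvdn_mulr.
have ex := eqz_of_ev hx hy (e m hm).
have [j hj] := af_eq_ex hxz hm.
have c : (af_den z)%:Z * af_num y m - (af_den y)%:Z * af_num z m = (af_den y)%:Z * j * n%:Z.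
  have hx0 : (af_den x)%:Z != 0 by rewrite eqz_nat -lt0n.
  apply: (mulIf hx0).
  transitivity ((af_den z)%:Z * ((af_den x)%:Z * af_num y m) - (af_den y)%:Z * af_num z m * (af_den x)%:Z); first by ring.
  rewrite -ex.
  transitivity ((af_den y)%:Z * ((af_den z)%:Z * af_num x m - (af_den x)%:Z * af_num z m)); first by ring.
  rewrite hj /m PoszM; ring.
have -> : (af_den z)%:Z * af_num y n - (af_den y)%:Z * af_num z n =
  ((af_den z)%:Z * af_num y m - (af_den y)%:Z * af_num z m)
  - (af_den z)%:Z * (af_num y m - af_num y n) + (af_den y)%:Z * (af_num z m - af_num z n) by ring.
rewrite c; apply: rpredD; first apply: rpredB.
- by apply: dvdz_mull; apply: dvdzz.
- by apply: dvdz_mull; apply: vy.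
- by apply: dvdz_mull; apply: vz.
Qed.

Lemma ev0 n : ev n af0 = 0. Proof. exact: evR. Qed.
Lemma ev1 n : ev n af1 = 1. Proof. exact: evR. Qed.

Ltac evtac := rewrite /mat_det /af_sub /af0 /af1 /=;
  rewrite ?(evD, evM, evN, evR); try (apply: vpos; vtac).

Definition Pm y x g t := mat_scal t (mat_mul (mat_mul (hmat y x) g) (hinv y x)).
Definition um := af_of_rat (-1).

Lemma ident1 n y x g t1 t2 : y != 0 -> af_valid x -> mat_valid g -> af_valid t1 -> af_valid t2 ->
  let P := Pm y x g t1 in let Q := Pm y x (mat_mul g (amat um)) t2 in
  ev n (m22 P) * ev n (m12 Q) - ev n (m12 P) * ev n (m22 Q) =
  2 * ev n x * (ev n (m11 P) * ev n (m22 Q) - ev n (m21 P) * ev n (m12 Q)).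
Proof.
move=> hy vx [va vb vc vd] v1 v2 P Q; rewrite /P /Q /Pm /um.
evtac.
by field.
Qed.

Lemma ident2 n y x g t1 t2 : y != 0 -> af_valid x -> mat_valid g -> af_valid t1 -> af_valid t2 ->
  let P := Pm y x g t1 in let Q := Pm y x (mat_mul g (amat um)) t2 in
  ev n (mat_det P) * ev n (mat_det Q) =
  - (ev n (m11 P) * ev n (m22 Q) - ev n (m21 P) * ev n (m12 Q)) ^+ 2.
Proof.
move=> hy vx [va vb vc vd] v1 v2 P Q; rewrite /P /Q /Pm /um.
evtac.
by field.
Qed.

Lemma dvd_prod_in (d : nat) (s : seq nat) : d \in s -> (d %| \prod_(i <- s) i)%N.
Proof.
elim: s => // a s IH; rewrite in_cons big_cons => /orP [/eqP -> | h].
  exact: dvdn_mulr.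
by apply: dvdn_mull; apply: IH.
Qed.

Lemma prod_pos (s : seq nat) : all (fun i => 0 < i)%N s -> (0 < \prod_(i <- s) i)%N.
Proof.
elim: s => [|a s IH]; first by rewrite big_nil.
by rewrite big_cons /= => /andP [h1 h2]; rewrite muln_gt0 h1 IH.
Qed.

Lemma evK n x : (0 < af_den x)%N -> ev n x * (Posz (af_den x))%:~R = (af_num x n)%:~R.
Proof. move=> h; rewrite /ev mulfVK //; exact: natrne0. Qed.

Lemma key2 y x g t1 t2 : 0 < y -> af_valid x -> mat_valid g -> af_valid t1 -> af_valid t2 ->
  inK (Pm y x g t1) -> inK (Pm y x (mat_mul g (amat um)) t2) ->
  af_in_zhat (af_mul (af_of_rat 1%:R) (af_mul (af_of_rat 2%:R) x)).
Proof.
move=> hy vx vg v1 v2.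
have hy0 : y != 0 by rewrite gt_eqF.
set P := Pm y x g t1; set Q := Pm y x (mat_mul g (amat um)) t2.
move=> [[p11 p12 p21 p22] [[zdP [e1 [ve1 [ze1 he1]]]] [z11 z12 z21 z22]]].
move=> [[q11 q12 q21 q22] [[zdQ [e2 [ve2 [ze2 he2]]]] [w11 w12 w21 w22]]].
set T := af_mul (af_of_rat 1%:R) (af_mul (af_of_rat 2%:R) x).
have vT : af_valid T by rewrite /T; vtac.
have vP : af_valid (mat_det P) by rewrite /mat_det /af_sub; vtac.
have vQ : af_valid (mat_det Q) by rewrite /mat_det /af_sub; vtac.
have vPe : af_valid (af_mul (mat_det P) e1) by vtac.
have vQe : af_valid (af_mul (mat_det Q) e2) by vtac.
set s := [:: af_den (m11 P); af_den (m12 P); af_den (m21 P); af_den (m22 P);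
   af_den (m11 Q); af_den (m12 Q); af_den (m21 Q); af_den (m22 Q);
   af_den (af_mul (mat_det P) e1); af_den (af_mul (mat_det Q) e2);
   af_den e1; af_den e2; af_den T].
set L := (af_den x * \prod_(i <- s) i)%N.
have hs : (0 < \prod_(i <- s) i)%N.
  apply: prod_pos; rewrite /s /=.
  by rewrite (vpos p11) (vpos p12) (vpos p21) (vpos p22) (vpos q11) (vpos q12) (vpos q21) (vpos q22)
    (vpos vPe) (vpos vQe) (vpos ve1) (vpos ve2) (vpos vT).
have hL : (0 < L)%N by rewrite muln_gt0 (vpos vx) hs.
have dL : forall d, d \in s -> (d %| L)%N.
  by move=> d hd; apply: dvdn_mull; apply: dvd_prod_in.
have dNL : forall d, d \in s -> (af_den x * d %| L)%N.
  by move=> d hd; apply: dvdn_mul => //; apply: dvd_prod_in.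
have iZ : forall z, af_valid z -> af_den z \in s -> af_in_zhat z -> isZ (ev L z).
  by move=> z vz hz; apply: zin_ev => //; apply: dL.
have I1 : ev L (m22 P) * ev L (m12 Q) - ev L (m12 P) * ev L (m22 Q) =
  2 * ev L x * (ev L (m11 P) * ev L (m22 Q) - ev L (m21 P) * ev L (m12 Q))
  := ident1 L y x g t1 t2 hy0 vx vg v1 v2.
have I2 : ev L (mat_det P) * ev L (mat_det Q) =
  - (ev L (m11 P) * ev L (m22 Q) - ev L (m21 P) * ev L (m12 Q)) ^+ 2
  := ident2 L y x g t1 t2 hy0 vx vg v1 v2.
have i11 := iZ _ p11 (ltac:(by rewrite /s !inE eqxx ?orbT)) z11.
have i12 := iZ _ p12 (ltac:(by rewrite /s !inE eqxx ?orbT)) z12.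
have i21 := iZ _ p21 (ltac:(by rewrite /s !inE eqxx ?orbT)) z21.
have i22 := iZ _ p22 (ltac:(by rewrite /s !inE eqxx ?orbT)) z22.
have j11 := iZ _ q11 (ltac:(by rewrite /s !inE eqxx ?orbT)) w11.
have j12 := iZ _ q12 (ltac:(by rewrite /s !inE eqxx ?orbT)) w12.
have j21 := iZ _ q21 (ltac:(by rewrite /s !inE eqxx ?orbT)) w21.
have j22 := iZ _ q22 (ltac:(by rewrite /s !inE eqxx ?orbT)) w22.
have ie1 := iZ _ ve1 (ltac:(by rewrite /s !inE eqxx ?orbT)) ze1.
have ie2 := iZ _ ve2 (ltac:(by rewrite /s !inE eqxx ?orbT)) ze2.
have [k1 hk1] := eq1_ev (vpos vPe) he1 hL (dNL (af_den (af_mul (mat_det P) e1)) (ltac:(by rewrite /s !inE eqxx ?orbT))).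
have [k2 hk2] := eq1_ev (vpos vQe) he2 hL (dNL (af_den (af_mul (mat_det Q) e2)) (ltac:(by rewrite /s !inE eqxx ?orbT))).
apply: (ev_zin vT hL (dL (af_den T) (ltac:(by rewrite /s !inE eqxx ?orbT)))).
rewrite evM in hk1; try (apply: vpos; vtac).
rewrite evM in hk2; try (apply: vpos; vtac).
have hNX := evK L x (vpos vx).
move: I1 I2 hk1 hk2 hNX.
set S22 := (ev L (m11 P) * ev L (m22 Q) - ev L (m21 P) * ev L (m12 Q)).
set S12 := (ev L (m22 P) * ev L (m12 Q) - ev L (m12 P) * ev L (m22 Q)).
set d1 := ev L (mat_det P); set d2 := ev L (mat_det Q).
set E1 := ev L e1; set E2 := ev L e2; set X := ev L x; set N := (Posz (af_den x))%:~R.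
move=> I1 I2 hk1 hk2 hNX.
have iS22 : isZ S22 by apply: isZB; apply: isZM.
have iS12 : isZ S12 by apply: isZB; apply: isZM.
have E : ev L T = S12 * S22 * (-(E1 * E2)) - 2 * (X * N) * (k1%:~R + k2%:~R + N * k1%:~R * k2%:~R).
  rewrite /T; evtac.
  rewrite I1.
  have e3 : S22 ^+ 2 = - (d1 * d2) by rewrite I2 opprK.
  transitivity (2 * X * S22 ^+ 2 * (-(E1 * E2)) - 2 * (X * N) * (k1%:~R + k2%:~R + N * k1%:~R * k2%:~R)); last by ring.
  rewrite e3.
  transitivity (2 * X * ((d1 * E1) * (d2 * E2)) - 2 * (X * N) * (k1%:~R + k2%:~R + N * k1%:~R * k2%:~R)); last by ring.
  rewrite hk1 hk2 -/X mul1r; ring.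
rewrite E hNX; apply: isZB; first by apply: isZM; [apply: isZM | apply: isZN; apply: isZM].
apply: isZM; first by apply: isZM; [exists 2 | apply: isZ_int].
apply: isZD; first apply: isZD; try apply: isZ_int.
by apply: isZM; [apply: isZM|]; apply: isZ_int.
Qed.

Lemma ident3 n y x g t : y != 0 -> af_valid x -> mat_valid g -> af_valid t ->
  let P := Pm y x g t in let W := Pm y af0 g t in
  [/\ ev n (m11 W) = ev n (m11 P) - ev n x * ev n (m21 P),
      ev n (m12 W) = (ev n (m11 P) - ev n x * ev n (m21 P)) * ev n x + ev n (m12 P) - ev n x * ev n (m22 P),
      ev n (m21 W) = ev n (m21 P),
      ev n (m22 W) = ev n (m21 P) * ev n x + ev n (m22 P) &
      ev n (mat_det W) = ev n (mat_det P)].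
Proof.
move=> hy vx [va vb vc vd] v1 P W; rewrite /P /W /Pm.
split; evtac; by field.
Qed.

Lemma validW y x g t : af_valid x -> mat_valid g -> af_valid t -> mat_valid (Pm y x g t).
Proof.
move=> vx [va vb vc vd] v1; rewrite /Pm /hmat /hinv /af0 /af1 /=; split; vtac.
Qed.

Lemma key3 y x g t : 0 < y -> af_valid x -> mat_valid g -> af_valid t ->
  af_in_zhat x -> inK (Pm y x g t) -> inK (Pm y af0 g t).
Proof.
move=> hy vx vg v1 zx.
have hy0 : y != 0 by rewrite gt_eqF.
have vW := validW y af0 g t (valid_rat 0) vg v1.
have I3 := ident3 _ _ _ _ _ hy0 vx vg v1.
move: I3 vW.
set P := Pm y x g t; set W := Pm y af0 g t.
move=> I3 vW.
move=> [[p11 p12 p21 p22] [[zdP [e1 [ve1 [ze1 he1]]]] [z11 z12 z21 z22]]].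
have [r11 r12 r21 r22] := vW.
have vP : af_valid (mat_det P) by rewrite /mat_det /af_sub; vtac.
have vdW : af_valid (mat_det W) by rewrite /mat_det /af_sub; vtac.
set s := [:: af_den (m11 P); af_den (m12 P); af_den (m21 P); af_den (m22 P);
   af_den (m11 W); af_den (m12 W); af_den (m21 W); af_den (m22 W);
   af_den (mat_det P); af_den (mat_det W); af_den x].
set L := (\prod_(i <- s) i)%N.
have hL : (0 < L)%N.
  apply: prod_pos; rewrite /s /=.
  by rewrite (vpos p11) (vpos p12) (vpos p21) (vpos p22) (vpos r11) (vpos r12) (vpos r22)
    (vpos vP) (vpos vdW) (vpos vx).
have dL : forall d, d \in s -> (d %| L)%N by move=> d hd; apply: dvd_prod_in.
have iZ : forall z, af_valid z -> af_den z \in s -> af_in_zhat z -> isZ (ev L z).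
  by move=> z vz hz; apply: zin_ev => //; apply: dL.
have i11 := iZ _ p11 (ltac:(by rewrite /s !inE eqxx ?orbT)) z11.
have i12 := iZ _ p12 (ltac:(by rewrite /s !inE eqxx ?orbT)) z12.
have i21 := iZ _ p21 (ltac:(by rewrite /s !inE eqxx ?orbT)) z21.
have i22 := iZ _ p22 (ltac:(by rewrite /s !inE eqxx ?orbT)) z22.
have iX := iZ _ vx (ltac:(by rewrite /s !inE eqxx ?orbT)) zx.
have iP := iZ _ vP (ltac:(by rewrite /s !inE eqxx ?orbT)) zdP.
have [e11 e12 e21 e22 ed] := I3 L.
have zz : forall z, af_valid z -> af_den z \in s -> isZ (ev L z) -> af_in_zhat z.
  by move=> z vz hz; apply: ev_zin => //; apply: dL.
split; first by [].
split.
  split.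
    apply: (zz _ vdW (ltac:(by rewrite /s !inE eqxx ?orbT))); by rewrite ed.
  exists e1; split => //; split => //.
  apply: (@transfer (af_mul (mat_det P) e1)) => //; first by apply: vpos; vtac.
  - by vtac.
  - exact: valid_rat.
  - move=> n hn; rewrite !evM; try (apply: vpos; vtac).
    by have [_ _ _ _ ->] := I3 n.
split.
- apply: (zz _ r11 (ltac:(by rewrite /s !inE eqxx ?orbT))); rewrite e11.
  by apply: isZB => //; apply: isZM.
- apply: (zz _ r12 (ltac:(by rewrite /s !inE eqxx ?orbT))); rewrite e12.
  by apply: isZB; [apply: isZD; [apply: isZM; [apply: isZB; [|apply: isZM]|]|]|apply: isZM].
- apply: (zz _ r21 (ltac:(by rewrite /s !inE eqxx ?orbT))); by rewrite e21.
- apply: (zz _ r22 (ltac:(by rewrite /s !inE eqxx ?orbT))); rewrite e22.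
  by apply: isZD => //; apply: isZM.
Qed.

Lemma zu : zhat_unit um.
Proof.
have vu : af_valid um := valid_rat _.
have iz : af_in_zhat um.
  apply: (@ev_zin um (af_den um) vu (vpos vu) (dvdnn _)).
  by rewrite /um evR; exists (-1).
split => //; exists um; split => //; split => //.
Qed.

Lemma GLa g : inGL2 g -> inGL2 (mat_mul g (amat um)).
Proof.
move=> [[va vb vc vd] [e0 [ve0 he0]]].
split.
  rewrite /amat /um /af0 /af1 /=; split; vtac.
exists (af_mul um e0); split; first by rewrite /um; vtac.
apply: (@transfer (af_mul (mat_det g) e0)) => //.
- apply: vpos; rewrite /mat_det /af_sub; vtac.
- rewrite /mat_det /af_sub /amat /um /af0 /af1 /=; vtac.
- exact: valid_rat.
- move=> n hn; rewrite /um; evtac; ring.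
Qed.

Lemma x_in_zhat x : af_valid x ->
  af_in_zhat (af_mul (af_of_rat 1%:R) (af_mul (af_of_rat 2%:R) x)) ->
  ~ af_val_m1 2 x -> af_in_zhat x.
Proof.
move=> vx Z2 H2.
have h1 : af_in_Zp 2 (af_mul (af_of_rat 2%:R) x).
  by exists 1%N; split => //.
have : af_in_Zp 2 x.
  by case: (classic (af_in_Zp 2 x)) => // h; exfalso; apply: H2; split.
case=> d [d0 [d2 Zd]].
set T := af_mul (af_of_rat 1%:R) (af_mul (af_of_rat 2%:R) x).
set D := af_mul (af_of_rat d%:R) x.
have vT : af_valid T by rewrite /T; vtac.
have vD : af_valid D by rewrite /D; vtac.
set n := (af_den x * af_den T * af_den D)%N.
have hn : (0 < n)%N.
  have hh1 := vpos vT; have hh2 := vpos vD; have hh3 := vpos vx.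
  rewrite /n; nia.
have iT : isZ (ev n T).
  apply: (zin_ev vT hn) => //; rewrite /n; apply: dvdn_mulr; apply: dvdn_mull; exact: dvdnn.
have iD : isZ (ev n D).
  apply: (zin_ev vD hn) => //; rewrite /n; apply: dvdn_mull; exact: dvdnn.
apply: (ev_zin vx hn); first by rewrite /n -mulnA; apply: dvdn_mulr; exact: dvdnn.
move: iT iD; rewrite /T /D; evtac.
move=> iT iD.
have od : odd d by move: d2; rewrite dvdn2 negbK.
have -> : ev n x = d%:R * ev n x - (d./2)%:R * (1 * (2 * ev n x)).
  have hd : (d./2 * 2 + 1)%N = d by rewrite muln2 addnC -[in RHS](odd_double_half d) od.
  rewrite -{1}hd natrD natrM; ring.
by apply: isZB => //; apply: isZM => //; exists (d./2)%:Z.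
Qed.

Theorem lemma3p2 (C : numClosedFieldType) (f : mat2 -> C) (y : rat) (x : afin) :
  in_Hfin f ->
  (exists g, inGL2 g /\ f g != 0) ->
  biA_invariant f ->
  0 < y ->
  af_valid x ->
  (forall p : nat, prime p -> af_p_zero p x \/ ~ af_in_Zp p x) ->
  (forall g, inGL2 g -> f g != 0 -> in_phi y x g) ->
  ~ af_val_m1 2 x ->
  forall g, inGL2 g -> f g != 0 -> in_phi y af0 g.
Proof.
move=> _ _ HA Hy vx _ Hsupp H2 g Hg Hfg.
have vg : mat_valid g by case: Hg.
have [_ Hfa] := HA um g (valid_rat _) zu Hg.
have Hga := GLa g Hg.
have Hfga : f (mat_mul g (amat um)) != 0 by rewrite Hfa.
have [t1 [vt1 [ut1 K1]]] := Hsupp g Hg Hfg.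
have [t2 [vt2 [_ K2]]] := Hsupp _ Hga Hfga.
have Z2 := key2 y x g t1 t2 Hy vx vg vt1 vt2 K1 K2.
have zx := x_in_zhat x vx Z2 H2.
exists t1; split => //; split => //.
exact: key3 y x g t1 Hy vx vg vt1 zx K1.
Qed.
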